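(* In a CDec-POMDP with a homogeneous policy $\pi$ (as described in the context), let $f_w$ have the form $f_w(\mathbf{s}_t,\mathbf{a}_t)=\sum_{i\in S,j\in A}n_t(i,j)\,f_w\big(i,j,o(i,\mathbf{n}_{\mathbf{s}_t})\big)$. Then the approximate policy gradient $\sum_{t=1}^H\mathbb{E}_{\mathbf{s}_t,\mathbf{a}_t}\big[f_w(\mathbf{s}_t,\mathbf{a}_t)\nabla_\theta\log P(\mathbf{a}_t\mid\mathbf{s}_t)\big]$ equals $$\mathbb{E}_{\mathbf{n}_{1:H}\sim P(\cdot;\pi)}\Big[\sum_{t=1}^H\sum_{i\in S,j\in A}n_t(i,j)\,\nabla_\theta\log\pi\big(j\mid i,o(i,\mathbf{n}_t)\big)\,f_w\big(i,j,o(i,\mathbf{n}_t)\big)\Big],$$ where the expectation is over count-table sequences $\mathbf{n}_{1:H}$ (taking values in the set $\Omega_{1:H}$ of consistent count tables).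
   Context: CDec-POMDP: $M$ agents, finite local state space $S$, finite action set $A$, horizon $H$; at time $t$ agent $m$ is in state $s^m_t$ and takes action $a^m_t$. Counts: $n_t(i)=|\{m:s^m_t=i\}|$, $n_t(i,j)=|\{m:(s^m_t,a^m_t)=(i,j)\}|$, $n_t(i,j,i')=|\{m:(s^m_t,a^m_t,s^m_{t+1})=(i,j,i')\}|$; $\mathbf{n}_t=\mathbf{n}_{\mathbf{s}_t}=(n_t(i))_{i\in S}$. Initial local states are i.i.d. from $b_o$; given $\mathbf{s}_t$, all agents independently act according to a common policy $\pi_t(j\mid i,o(i,\mathbf{n}_{\mathbf{s}_t}))$ (differentiable in parameter $\theta$, positive probabilities; $o$ a fixed observation function), so $P(\mathbf{a}_t\mid\mathbf{s}_t)=\prod_m\pi_t(a^m_t\mid s^m_t,o(s^m_t,\mathbf{n}_{\mathbf{s}_t}))$; each agent then independently transitions with probability $\phi_t(i'\mid i,j,\mathbf{n}_{\mathbf{s}_t})$. $P(\mathbf{n}_{1:H};\pi)$ denotes the distribution of the sequence of count tables $\mathbf{n}_{1:H}=\{(n_t(i)),(n_t(i,j)),(n_t(i,j,i'))\}_{t=1}^H$ induced by the joint trajectory of all agents under this process. $\Omega_{1:H}$ is the set of count tables with $\sum_i n_t(i)=M$, $\sum_j n_t(i,j)=n_t(i)$, $\sum_{i'}n_t(i,j,i')=n_t(i,j)$ for all $i,j,t$. The function $f_w(i,j,o)$ does not depend on $\theta$; $\mathbb{E}_{\mathbf{s}_t,\mathbf{a}_t}$ is over the marginal of $(\mathbf{s}_t,\mathbf{a}_t)$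 under the process. *)

(* Defs.v *)
From HB Require Import structures.
From mathcomp Require Import all_boot all_order all_algebra.
From mathcomp Require Import boolp classical_sets reals topology normedtype derive exp.
Set Implicit Arguments. Unset Strict Implicit. Unset Printing Implicit Defensive.
Import Order.TTheory GRing.Theory Num.Theory numFieldNormedType.Exports.
Local Open Scope ring_scope.

(* CDec-POMDP with M agents, local states S, actions A, observations O,
   horizon H; time t = 1..H is represented by t : 'I_H (0-based).
   A trajectory consists of joint states s_1..s_{H+1} and joint actions
   a_1..a_H. *)

Definition jstate (S : finType) (M : nat) := {ffun 'I_M -> S}.
Definition jaction (A : finType) (M : nat) := {ffun 'I_M -> A}.

Definition scount (S : finType) (M : nat) (s : jstate S M) : {ffun S -> nat} :=
  [ffun i => #|[set m | s m == i]|].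

Definition sacount (S A : finType) (M : nat) (s : jstate S M) (a : jaction A M)
  (i : S) (j : A) : nat := #|[set m | (s m, a m) == (i, j)]|.

Definition traj (S A : finType) (M H : nat) :=
  ({ffun 'I_H.+1 -> jstate S M} * {ffun 'I_H -> jaction A M})%type.

Definition cur (H : nat) (t : 'I_H) : 'I_H.+1 := widen_ord (leqnSn H) t.
Definition nxt (H : nat) (t : 'I_H) : 'I_H.+1 := lift ord0 t.

Definition traj_prob (R : realType) (S A O : finType) (M H d : nat)
  (b0 : S -> R) (o : S -> {ffun S -> nat} -> O)
  (pi : 'I_H -> 'rV[R]_d -> S -> O -> A -> R)
  (phi : 'I_H -> S -> A -> {ffun S -> nat} -> S -> R)
  (th : 'rV[R]_d) (tr : traj S A M H) : R :=
  (\prod_(m < M) b0 (tr.1 ord0 m)) *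
  \prod_(t < H)
     ((\prod_(m < M) pi t th (tr.1 (cur t) m)
                         (o (tr.1 (cur t) m) (scount (tr.1 (cur t)))) (tr.2 t m)) *
      (\prod_(m < M) phi t (tr.1 (cur t) m) (tr.2 t m)
                         (scount (tr.1 (cur t))) (tr.1 (nxt t) m))).

Definition marginal (R : realType) (S A O : finType) (M H d : nat)
  (b0 : S -> R) (o : S -> {ffun S -> nat} -> O)
  (pi : 'I_H -> 'rV[R]_d -> S -> O -> A -> R)
  (phi : 'I_H -> S -> A -> {ffun S -> nat} -> S -> R)
  (th : 'rV[R]_d) (t : 'I_H) (s : jstate S M) (a : jaction A M) : R :=
  \sum_(tr : traj S A M H | (tr.1 (cur t) == s) && (tr.2 t == a))
     traj_prob b0 o pi phi th tr.

(* Count tables at one time step: (n_t(i)), (n_t(i,j)), (n_t(i,j,i')),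
   with entries in 0..M. *)
Definition ctab (S A : finType) (M : nat) :=
  ({ffun S -> 'I_M.+1} * {ffun (S * A)%type -> 'I_M.+1}
   * {ffun (S * A * S)%type -> 'I_M.+1})%type.
Definition cseq (S A : finType) (M H : nat) := {ffun 'I_H -> ctab S A M}.

Definition counts (S A : finType) (M H : nat) (tr : traj S A M H) : cseq S A M H :=
  [ffun t =>
    ([ffun i => inord #|[set m | tr.1 (cur t) m == i]|],
     [ffun ij => inord #|[set m | (tr.1 (cur t) m, tr.2 t m) == ij]|],
     [ffun iji => inord #|[set m | (tr.1 (cur t) m, tr.2 t m, tr.1 (nxt t) m) == iji]|])].

Definition Omega (S A : finType) (M H : nat) : pred (cseq S A M H) :=
  fun N => [forall t : 'I_H,
    [&& (\sum_(i : S) ((N t).1.1 i : nat) == M)%N,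
        [forall i : S, (\sum_(j : A) ((N t).1.2 (i, j) : nat) == (N t).1.1 i)%N] &
        [forall i : S, forall j : A,
           (\sum_(i' : S) ((N t).2 (i, j, i') : nat) == (N t).1.2 (i, j))%N]]].

Definition count_prob (R : realType) (S A O : finType) (M H d : nat)
  (b0 : S -> R) (o : S -> {ffun S -> nat} -> O)
  (pi : 'I_H -> 'rV[R]_d -> S -> O -> A -> R)
  (phi : 'I_H -> S -> A -> {ffun S -> nat} -> S -> R)
  (th : 'rV[R]_d) (N : cseq S A M H) : R :=
  \sum_(tr : traj S A M H | counts tr == N) traj_prob b0 o pi phi th tr.

Definition ntab (S A : finType) (M : nat) (c : ctab S A M) : {ffun S -> nat} :=
  [ffun i => (c.1.1 i : nat)].

Definition grad (R : realType) (d : nat) (f : 'rV[R]_d -> R) (th : 'rV[R]_d)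
  : 'rV[R]_d := \row_(k < d) ('D_(delta_mx 0 k) f th).

(* Main.v *)
Require Import Defs.
From HB Require Import structures.
From mathcomp Require Import all_boot all_order all_algebra zify ring.
From mathcomp Require Import boolp classical_sets functions reals topology normedtype derive exp.
Import Order.TTheory GRing.Theory Num.Theory numFieldNormedType.Exports.
Local Open Scope ring_scope.
Section An.
Variables (R : realType) (d : nat).
Implicit Types (P : 'rV[R]_d -> R) (x v : 'rV[R]_d).

Lemma Dln P x v : differentiable P x -> 0 < P x ->
  differentiable (fun y => ln (P y)) x /\
  'D_v (fun y => ln (P y)) x = 'D_v P x / P x.
Proof.
move=> dP Pp.
have dl : differentiable (@ln R) (P x).
  have [h _] := is_derive1_ln Pp; exact/derivable1_diffP.
have dc : differentiable (@ln R \o P) x by apply: differentiable_comp.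
split; first exact: dc.
rewrite (deriveE _ dc) (diff_comp dP dl) /= (diff1E dl) derive1E.
have [_ ->] := is_derive1_ln Pp.
by rewrite -(deriveE _ dP).
Qed.

Lemma derive_bigsum (I : Type) (r : seq I) (F : I -> 'rV[R]_d -> R) x v :
  (forall i, derivable (F i) x v) ->
  derivable (fun y => \sum_(i <- r) F i y) x v /\
  'D_v (fun y => \sum_(i <- r) F i y) x = \sum_(i <- r) 'D_v (F i) x.
Proof.
move=> dF; elim: r => [|i r [IHd IHe]].
  have -> : (fun y => \sum_(i <- [::]) F i y) = cst 0.
    by apply: funext => y; rewrite big_nil.
  by rewrite big_nil derive_cst; split=> //; exact: derivable_cst.
have -> : (fun y => \sum_(j <- i :: r) F j y) = (F i + (fun y => \sum_(j <- r) F j y)).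
  by apply: funext => y; rewrite big_cons.
rewrite big_cons deriveD //; split=> //; last by rewrite IHe.
exact: derivableD.
Qed.

Lemma ln_prod (I : Type) (r : seq I) (E : I -> R) :
  (forall i, 0 < E i) -> ln (\prod_(i <- r) E i) = \sum_(i <- r) ln (E i).
Proof.
move=> Ep; elim: r => [|i r IH]; first by rewrite !big_nil ln1.
rewrite !big_cons lnM ?IH //; rewrite posrE //. exact: prodr_gt0.
Qed.


Lemma score (A : finType) (P : A -> 'rV[R]_d -> R) x v :
  (forall j, differentiable (P j) x) -> (forall j y, 0 < P j y) ->
  (forall y, \sum_j P j y = 1) ->
  \sum_j P j x * 'D_v (fun y => ln (P j y)) x = 0.
Proof.
move=> dP Pp P1.
transitivity (\sum_j 'D_v (P j) x).
  apply: eq_bigr => j _; have [_ ->] := Dln (P j) x v (dP j) (Pp j x).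
  by rewrite mulrCA mulfV ?mulr1 // gt_eqF.
have dd : forall j, derivable (P j) x v by move=> j; exact: diff_derivable.
have [_ <-] := derive_bigsum _ (index_enum A) P x v dd.
have -> : (fun y => \sum_(i <- index_enum A) P i y) = cst 1.
  by apply: funext => y; rewrite P1.
exact: derive_cst.
Qed.

Lemma prod_cross (I A : finType) (p f g : I -> A -> R) :
  (forall i, \sum_j p i j * g i j = 0) ->
  \sum_(a : {ffun I -> A}) (\prod_i p i (a i)) *
     ((\sum_i f i (a i)) * (\sum_i g i (a i)) - \sum_i f i (a i) * g i (a i)) = 0.
Proof.
move=> pg0.
have E a : (\sum_i f i (a i)) * (\sum_i g i (a i)) - \sum_i f i (a i) * g i (a i)
   = \sum_i \sum_(i' | i' != i) f i (a i) * g i' (a i').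
  rewrite mulr_suml -sumrB; apply: eq_bigr => i _.
  by rewrite mulr_sumr (bigD1 i) //= addrC addrK.
under eq_bigr do rewrite E mulr_sumr.
rewrite exchange_big /=; apply: big1 => i _.
under eq_bigr do rewrite mulr_sumr.
rewrite exchange_big /=; apply: big1 => i' ii'.
pose phi l j := if l == i then f i j else if l == i' then g i' j else 1.
transitivity (\sum_(a : {ffun I -> A}) \prod_l (p l (a l) * phi l (a l))).
  apply: eq_bigr => a _; rewrite big_split /=; congr (_ * _).
  rewrite (bigD1 i) //= (bigD1 i') //= big1 ?mulr1.
    by rewrite /phi eqxx (negbTE ii') eqxx.
  by move=> l /andP[li li']; rewrite /phi (negbTE li) (negbTE li').
rewrite -(bigA_distr_bigA (fun l j => p l j * phi l j)) /= (bigD1 i') //= mulrC.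
suff -> : \sum_j p i' j * phi i' j = 0 by rewrite mulr0.
rewrite -[RHS](pg0 i'); apply: eq_bigr => j _.
by rewrite /phi (negbTE ii') eqxx.
Qed.

End An.
Set Implicit Arguments. Unset Strict Implicit. Unset Printing Implicit Defensive.

Section Core.
Variables (R : realType) (X Y : finType) (c : X -> Y) (upd : X -> Y -> X) (y0 : Y).
Hypotheses (cupd : forall x y, c (upd x y) = y)
  (updupd : forall x y y', upd (upd x y) y' = upd x y')
  (updc : forall x, upd x (c x) = x).

Lemma core (w : X -> R) (Q : X -> Y -> R) :
  (forall x y, w (upd x y) = w x) -> (forall x y y', Q (upd x y) y' = Q x y') ->
  \sum_x w x * Q x (c x) = \sum_x (w x * (c x == y0)%:R) * \sum_y Q x y.
Proof.
move=> winv Qinv.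
rewrite (partition_big c xpredT) //=.
transitivity (\sum_y \sum_(x | c x == y0) w x * Q x y).
  apply: eq_bigr => y _.
  rewrite (reindex_onto (fun x => upd x y) (fun x => upd x y0)) /=; last first.
    by move=> i /eqP <-; rewrite updupd updc.
  apply: eq_big => [x|x _]; last by rewrite cupd winv Qinv.
  rewrite cupd eqxx updupd /=; apply/eqP/eqP => [<-|<-]; first by rewrite cupd.
  by rewrite updc.
rewrite exchange_big /= [RHS](bigID (fun x => c x == y0)) /=.
rewrite [X in _ = _ + X]big1 ?addr0; last by move=> x /negbTE ->; rewrite mulr0 mul0r.
by apply: eq_bigr => x ->; rewrite mulr1 mulr_sumr.
Qed.
End Core.

Definition fupd (I : finType) (T : Type) (f : {ffun I -> T}) (i : I) (y : T) : {ffun I -> T} :=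
  [ffun j => if j == i then y else f j].

Lemma fupdE (I : finType) (T : Type) (f : {ffun I -> T}) i y j :
  fupd f i y j = if j == i then y else f j.
Proof. by rewrite ffunE. Qed.

Section Markov.
Variables (R : realType) (S A O : finType) (M H d : nat)
  (b0 : S -> R) (o : S -> {ffun S -> nat} -> O)
  (pi : 'I_H -> 'rV[R]_d -> S -> O -> A -> R)
  (phi : 'I_H -> S -> A -> {ffun S -> nat} -> S -> R)
  (th : 'rV[R]_d).
Hypothesis hpi1 : forall t x i ob, \sum_(j : A) pi t x i ob j = 1.
Hypothesis hphi1 : forall t i j n, \sum_(i' : S) phi t i j n i' = 1.

Definition Pi t (s : jstate S M) (a : jaction A M) :=
  \prod_(m < M) pi t th (s m) (o (s m) (scount s)) (a m).
Definition Ph t (s : jstate S M) (a : jaction A M) (s' : jstate S M) :=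
  \prod_(m < M) phi t (s m) (a m) (scount s) (s' m).
Definition K t (tr : traj S A M H) :=
  Pi t (tr.1 (cur t)) (tr.2 t) * Ph t (tr.1 (cur t)) (tr.2 t) (tr.1 (nxt t)).
Definition B (tr : traj S A M H) := \prod_(m < M) b0 (tr.1 ord0 m).

Lemma traj_probE tr : traj_prob b0 o pi phi th tr = B tr * \prod_t K t tr.
Proof. by []. Qed.

Definition cc (u : 'I_H) (tr : traj S A M H) := (tr.2 u, tr.1 (nxt u)).
Definition updt (u : 'I_H) (tr : traj S A M H) (y : jaction A M * jstate S M)
  : traj S A M H := (fupd tr.1 (nxt u) y.2, fupd tr.2 u y.1).

Lemma cc_updt u tr y : cc u (updt u tr y) = y.
Proof. by case: y => a s; rewrite /cc /updt /= !fupdE !eqxx. Qed.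

Lemma updt_updt u tr y y' : updt u (updt u tr y) y' = updt u tr y'.
Proof.
rewrite /updt /=; congr pair; apply/ffunP => j; rewrite !fupdE; by case: eqP.
Qed.

Lemma updt_cc u tr : updt u tr (cc u tr) = tr.
Proof.
case: tr => f g; rewrite /updt /cc /=; congr pair; apply/ffunP => j;
  rewrite !fupdE; by case: eqP => [->|].
Qed.

Lemma val_nxt (u : 'I_H) : val (nxt u) = u.+1.
Proof. by []. Qed.
Lemma val_cur (u : 'I_H) : val (cur u) = u.
Proof. by []. Qed.

Lemma updt1 (u : 'I_H) tr y (w : 'I_H.+1) : val w != u.+1 -> (updt u tr y).1 w = tr.1 w.
Proof.
move=> h; rewrite /updt /= fupdE; case: eqP => // E.
by move: h; rewrite E val_nxt eqxx.
Qed.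

Lemma updt2 u tr y (w : 'I_H) : w != u -> (updt u tr y).2 w = tr.2 w.
Proof. by move=> h; rewrite /updt /= fupdE (negbTE h). Qed.

Lemma B_inv u tr y : B (updt u tr y) = B tr.
Proof. by rewrite /B updt1. Qed.

Lemma K_inv (u v : 'I_H) tr y : v != u -> (val v != u.+1) -> K v (updt u tr y) = K v tr.
Proof.
move=> h1 h2; rewrite /K !updt2 // !updt1 // ?val_nxt ?val_cur // eqSS.
Qed.

Definition D (y0 : jaction A M * jstate S M) u (tr : traj S A M H) : R :=
  (cc u tr == y0)%:R.

Lemma D_inv y0 u v tr y : v != u -> D y0 v (updt u tr y) = D y0 v tr.
Proof.
move=> h; rewrite /D /cc updt2 // updt1 // val_nxt eqSS //.
Qed.

Lemma Ph_sum t s a : \sum_s' Ph t s a s' = 1.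
Proof.
rewrite /Ph -(bigA_distr_bigA (fun m i' => phi t (s m) (a m) (scount s) i')) /=.
by apply: big1 => m _; rewrite hphi1.
Qed.

Lemma step y0 (u : 'I_H) (W : traj S A M H -> R) (q : traj S A M H -> jaction A M -> R) :
  (forall tr y, W (updt u tr y) = W tr) ->
  (forall tr y a, q (updt u tr y) a = q tr a) ->
  \sum_tr W tr * K u tr * q tr (tr.2 u) =
  \sum_tr W tr * D y0 u tr * \sum_a Pi u (tr.1 (cur u)) a * q tr a.
Proof.
move=> Winv qinv.
have xinv : forall tr y, (updt u tr y).1 (cur u) = tr.1 (cur u).
  by move=> tr y; rewrite updt1 // val_cur; elim: (val u).
pose Q (tr : traj S A M H) (y : jaction A M * jstate S M) :=
  Pi u (tr.1 (cur u)) y.1 * Ph u (tr.1 (cur u)) y.1 y.2 * q tr y.1.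
transitivity (\sum_tr W tr * Q tr (cc u tr)).
  by apply: eq_bigr => tr _; rewrite -mulrA.
rewrite (core y0 (@cc_updt u) (@updt_updt u) (@updt_cc u) Winv); last first.
  by move=> tr y y'; rewrite /Q xinv qinv.
apply: eq_bigr => tr _; rewrite /D; congr (_ * _).
rewrite (eq_bigr (fun y => Q tr (y.1, y.2))); last by case.
rewrite -(pair_bigA _ (fun a s => Q tr (a, s))) /=.
apply: eq_bigr => a _; rewrite /Q /=.
under eq_bigr do rewrite mulrAC.
by rewrite -mulr_sumr Ph_sum mulr1.
Qed.

Lemma Pi_sum t s : \sum_a Pi t s a = 1.
Proof.
rewrite /Pi -(bigA_distr_bigA (fun m j => pi t th (s m) (o (s m) (scount s)) j)) /=.
by apply: big1 => m _; rewrite hpi1.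
Qed.

Definition KP k tr := \prod_(v < H | (v < k)%N) K v tr.
Definition DS y0 k tr := \prod_(v < H | (k <= v)%N) D y0 v tr.

Lemma KP_split k (hk : (k < H)%N) tr : KP k.+1 tr = K (Ordinal hk) tr * KP k tr.
Proof.
rewrite /KP (bigD1 (Ordinal hk)) //=; congr (_ * _); apply: eq_bigl => v.
rewrite -val_eqE /=; lia.
Qed.

Lemma DS_split y0 k (hk : (k < H)%N) tr : DS y0 k tr = D y0 (Ordinal hk) tr * DS y0 k.+1 tr.
Proof.
rewrite /DS (bigD1 (Ordinal hk)) //=; congr (_ * _); apply: eq_bigl => v.
rewrite -val_eqE /=; lia.
Qed.

Lemma KP_inv k (u : 'I_H) tr y : (k <= u)%N -> KP k (updt u tr y) = KP k tr.
Proof.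
move=> hk; apply: eq_bigr => v hv; apply: K_inv; rewrite -?val_eqE /=; lia.
Qed.

Lemma DS_inv y0 k (u : 'I_H) tr y : (u < k)%N -> DS y0 k (updt u tr y) = DS y0 k tr.
Proof.
move=> hk; apply: eq_bigr => v hv; apply: D_inv; rewrite -?val_eqE /=; lia.
Qed.

Lemma back y0 (t : 'I_H) (g : traj S A M H -> R)
  (ginv : forall (u : 'I_H) tr y, (t < u)%N -> g (updt u tr y) = g tr) n :
  (t + n < H)%N ->
  \sum_tr traj_prob b0 o pi phi th tr * g tr =
  \sum_tr B tr * KP (H - n) tr * DS y0 (H - n) tr * g tr.
Proof.
elim: n => [|n IH] hn.
  apply: eq_bigr => tr _; rewrite traj_probE /KP /DS subn0.
  rewrite [X in _ = _ * X * _]big1; last by move=> v; have := ltn_ord v; lia.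
  rewrite mulr1; congr (_ * _ * _); apply: eq_bigl => v; by rewrite ltn_ord.
have hk : (H - n.+1 < H)%N by lia.
have E : (H - n = (H - n.+1).+1)%N by lia.
rewrite IH; last by lia.
rewrite E; set k := (H - n.+1)%N.
pose u := Ordinal hk.
transitivity (\sum_tr (B tr * KP k tr * DS y0 k.+1 tr * g tr) * K u tr * (fun _ _ => 1) tr (tr.2 u)).
  by apply: eq_bigr => tr _; rewrite KP_split /=; ring.
etransitivity.
  apply: (@step y0 u (fun tr => B tr * KP k tr * DS y0 k.+1 tr * g tr) (fun _ _ => 1)) => //.
  move=> tr y; rewrite B_inv KP_inv ?DS_inv ?ginv //= /k; lia.
apply: eq_bigr => tr _; rewrite (DS_split y0 hk) /=.
under eq_bigr do rewrite mulr1.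
rewrite Pi_sum; ring.
Qed.

Lemma markov (t : 'I_H) (h : jstate S M -> jaction A M -> R) :
  (forall s, \sum_a Pi t s a * h s a = 0) ->
  \sum_tr traj_prob b0 o pi phi th tr * h (tr.1 (cur t)) (tr.2 t) = 0.
Proof.
move=> hz.
case: (pickP (@predT (traj S A M H))) => [tr0 _|none]; last first.
  by apply: big1 => tr _; have := none tr.
pose y0 := (tr0.2 t, tr0.1 ord0).
have ginv : forall (u : 'I_H) tr y, (t < u)%N ->
    h ((updt u tr y).1 (cur t)) ((updt u tr y).2 t) = h (tr.1 (cur t)) (tr.2 t).
  move=> u tr y tu; rewrite updt1 ?updt2 // -?val_eqE /=; lia.
rewrite (back y0 ginv (n := (H - t.+1)%N)); last by have := ltn_ord t; lia.
have E : (H - (H - t.+1) = t.+1)%N by have := ltn_ord t; lia.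
rewrite E.
transitivity (\sum_tr (B tr * KP t tr * DS y0 t.+1 tr) * K t tr
   * h (tr.1 (cur t)) (tr.2 t)).
  apply: eq_bigr => tr _; rewrite (KP_split (ltn_ord t)) /=.
  have -> : Ordinal (ltn_ord t) = t by apply: val_inj.
  ring.
etransitivity.
  apply: (@step y0 t (fun tr => B tr * KP t tr * DS y0 t.+1 tr) (fun tr a => h (tr.1 (cur t)) a)).
    by move=> tr y; rewrite B_inv KP_inv ?DS_inv.
  by move=> tr y a; rewrite updt1 // val_cur; lia.
by apply: big1 => tr _; rewrite hz mulr0.
Qed.

End Markov.

Section Counts.
Variables (S A : finType) (M H : nat).

Lemma cardsum (P : pred 'I_M) : #|[set m | P m]| = (\sum_(m < M) P m)%N.
Proof. by rewrite -sum1dep_card big_mkcond /=; apply: eq_bigr => m _; case: (P m). Qed.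

Lemma card_lt (P : pred 'I_M) : (#|[set m | P m]| < M.+1)%N.
Proof. by rewrite ltnS (leq_trans (max_card _)) // card_ord. Qed.

Lemma sum_eq1 (T : finType) (x : T) : (\sum_(y : T) (x == y) = 1)%N.
Proof.
rewrite (bigD1 x) //= eqxx big1 // => y /negbTE; by rewrite eq_sym => ->.
Qed.

Lemma card_pair (X Y : finType) (f : 'I_M -> X) (g : 'I_M -> Y) x :
  (\sum_(y : Y) #|[set m | (f m, g m) == (x, y)]| = #|[set m | f m == x]|)%N.
Proof.
under eq_bigr do rewrite cardsum.
rewrite cardsum exchange_big /=; apply: eq_bigr => m _.
under eq_bigr do rewrite xpair_eqE.
case: (f m == x) => /=; last by rewrite big1.
exact: sum_eq1.
Qed.

Lemma Omega_counts (tr : traj S A M H) : Omega (counts tr).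
Proof.
apply/forallP => t; rewrite !ffunE /=; apply/and3P; split.
- under eq_bigr do rewrite ffunE inordK ?card_lt //.
  under eq_bigr do rewrite cardsum.
  rewrite exchange_big /=.
  under eq_bigr do rewrite sum_eq1.
  by rewrite sum1_card card_ord.
- apply/forallP => i; rewrite ffunE inordK ?card_lt //.
  under eq_bigr do rewrite ffunE inordK ?card_lt //.
  by rewrite card_pair.
- apply/forallP => i; apply/forallP => j; rewrite ffunE inordK ?card_lt //.
  under eq_bigr do rewrite ffunE inordK ?card_lt //.
  by rewrite (card_pair (fun m => (tr.1 (cur t) m, tr.2 t m))).
Qed.

Lemma ntab_counts (tr : traj S A M H) t : ntab (counts tr t) = scount (tr.1 (cur t)).
Proof. by apply/ffunP => i; rewrite !ffunE inordK ?card_lt. Qed.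

Lemma n2_counts (tr : traj S A M H) t i j :
  ((counts tr t).1.2 (i, j) : nat) = sacount (tr.1 (cur t)) (tr.2 t) i j.
Proof. by rewrite !ffunE /= inordK ?card_lt. Qed.

Lemma saco (R : realType) (s : jstate S M) (a : jaction A M) (c : S -> A -> R) :
  \sum_i \sum_j (sacount s a i j)%:R * c i j = \sum_(m < M) c (s m) (a m).
Proof.
rewrite pair_bigA /=.
under eq_bigr do rewrite /sacount cardsum natr_sum mulr_suml.
rewrite exchange_big /=; apply: eq_bigr => m _.
rewrite (bigD1 (s m, a m)) //= big1 ?addr0.
  by rewrite eqxx mul1r.
by move=> [i j] /negbTE; rewrite eq_sym => ->; rewrite mul0r.
Qed.

End Counts.

Theorem theorem3 (R : realType) (S A O : finType) (M H d : nat)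
  (b0 : S -> R) (o : S -> {ffun S -> nat} -> O)
  (pi : 'I_H -> 'rV[R]_d -> S -> O -> A -> R)
  (phi : 'I_H -> S -> A -> {ffun S -> nat} -> S -> R)
  (fw : S -> A -> O -> R) (F : jstate S M -> jaction A M -> R)
  (th : 'rV[R]_d) :
  (forall i, 0 <= b0 i) -> \sum_(i : S) b0 i = 1 ->
  (forall t x i ob j, 0 < pi t x i ob j) ->
  (forall t x i ob, \sum_(j : A) pi t x i ob j = 1) ->
  (forall t i ob j x, differentiable (fun y => pi t y i ob j) x) ->
  (forall t i j n i', 0 <= phi t i j n i') ->
  (forall t i j n, \sum_(i' : S) phi t i j n i' = 1) ->
  (forall s a, F s a = \sum_(i : S) \sum_(j : A)
                         (sacount s a i j)%:R * fw i j (o i (scount s))) ->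
  \sum_(t < H) \sum_(s : jstate S M) \sum_(a : jaction A M)
     marginal b0 o pi phi th t s a *:
       (F s a *: grad (fun x => ln (\prod_(m < M) pi t x (s m) (o (s m) (scount s)) (a m))) th)
  =
  \sum_(N : cseq S A M H | Omega N)
     count_prob b0 o pi phi th N *:
       (\sum_(t < H) \sum_(i : S) \sum_(j : A)
          (((N t).1.2 (i, j) : nat)%:R
           * fw i j (o i (ntab (N t)))) *:
            grad (fun x => ln (pi t x i (o i (ntab (N t))) j)) th).
Proof.
move=> hb0 hb1 hpi0 hpi1 hdiff hphi0 hphi1 hF.
apply/rowP => k.
set v := delta_mx 0 k : 'rV[R]_d.
pose p := fun tr : traj S A M H => traj_prob b0 o pi phi th tr.
pose Dl t (s : jstate S M) (a : jaction A M) :=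
  'D_v (fun x => ln (\prod_(m < M) pi t x (s m) (o (s m) (scount s)) (a m))) th.
pose Gt t (s : jstate S M) (a : jaction A M) :=
  \sum_i \sum_j (sacount s a i j)%:R *
     (fw i j (o i (scount s)) * 'D_v (fun x => ln (pi t x i (o i (scount s)) j)) th).
pose GN (N : cseq S A M H) := \sum_t \sum_i \sum_j
   (((N t).1.2 (i, j) : nat)%:R * fw i j (o i (ntab (N t)))) *
     'D_v (fun x => ln (pi t x i (o i (ntab (N t))) j)) th.
have marg : forall t (Z : jstate S M -> jaction A M -> R),
    \sum_s \sum_a marginal b0 o pi phi th t s a * Z s a =
    \sum_tr p tr * Z (tr.1 (cur t)) (tr.2 t).
  move=> t Z.
  rewrite [RHS](@partition_big _ _ _ _ _ _ xpredT (fun tr : traj S A M H => (tr.1 (cur t), tr.2 t)) xpredT) //= pair_bigA /=.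
  apply: eq_bigr => -[s a] _ /=; rewrite /marginal mulr_suml.
  apply: eq_big => [tr|tr]; first by rewrite xpair_eqE.
  by move=> /andP[/eqP-> /eqP->].
transitivity (\sum_t \sum_s \sum_a marginal b0 o pi phi th t s a * (F s a * Dl t s a)).
  rewrite summxE; apply: eq_bigr => t _; rewrite summxE; apply: eq_bigr => s _.
  by rewrite summxE; apply: eq_bigr => a _; rewrite !mxE.
transitivity (\sum_(N | Omega N) count_prob b0 o pi phi th N * GN N); last first.
  rewrite summxE; apply: eq_bigr => N _; rewrite mxE summxE; congr (_ * _).
  apply: eq_bigr => t _; rewrite summxE; apply: eq_bigr => i _.
  by rewrite summxE; apply: eq_bigr => j _; rewrite !mxE.
have -> : \sum_(N | Omega N) count_prob b0 o pi phi th N * GN N =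
          \sum_tr p tr * GN (counts tr).
  rewrite [RHS](@partition_big _ _ _ _ _ _ xpredT (@counts S A M H) (@Omega S A M H)) //=; last first.
    by move=> tr _; exact: Omega_counts.
  apply: eq_bigr => N _; rewrite /count_prob mulr_suml.
  by apply: eq_big => [tr|tr /eqP ->].
have GNE : forall tr, GN (counts tr) = \sum_t Gt t (tr.1 (cur t)) (tr.2 t).
  move=> tr; apply: eq_bigr => t _; apply: eq_bigr => i _; apply: eq_bigr => j _.
  by rewrite n2_counts ntab_counts mulrA.
under [RHS]eq_bigr do rewrite GNE mulr_sumr.
rewrite [RHS]exchange_big /=.
apply: eq_bigr => t _; rewrite marg.
apply/eqP; rewrite -subr_eq0 -sumrB; apply/eqP.
under eq_bigr do rewrite -mulrBr.
apply: (@markov _ _ _ _ _ _ _ _ _ _ _ _ hpi1 hphi1 t (fun s a => F s a * Dl t s a - Gt t s a)).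
move=> s.
pose ob m := o (s m) (scount s).
have dd : forall m (j : A), derivable (fun y => pi t y (s m) (ob m) j) th v.
  by move=> m j; exact: diff_derivable.
have DlE : forall a, Dl t s a = \sum_m 'D_v (fun x => ln (pi t x (s m) (ob m) (a m))) th.
  move=> a; rewrite /Dl.
  have -> : (fun x => ln (\prod_(m < M) pi t x (s m) (o (s m) (scount s)) (a m))) =
            (fun x => \sum_(m < M) ln (pi t x (s m) (ob m) (a m))).
    by apply: funext => x; rewrite ln_prod.
  have dl : forall m, derivable (fun x => ln (pi t x (s m) (ob m) (a m))) th v.
    move=> m; have [dm _] := @Dln R d (fun y => pi t y (s m) (ob m) (a m)) th v
      (hdiff _ _ _ _ _) (hpi0 _ _ _ _ _).
    exact: diff_derivable.
  by have [_ ->] := @derive_bigsum R d _ (index_enum 'I_M)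
    (fun m x => ln (pi t x (s m) (ob m) (a m))) th v dl.
rewrite -[RHS](@prod_cross R _ _ (fun m j => pi t th (s m) (ob m) j)
  (fun m j => fw (s m) j (ob m))
  (fun m j => 'D_v (fun x => ln (pi t x (s m) (ob m) j)) th)); last first.
  by move=> m; apply: score => // j; exact: hdiff.
apply: eq_bigr => a _; congr (_ * (_ - _)).
  by rewrite hF saco DlE.
by rewrite /Gt saco.
Qed.
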